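(* Let $R$ be a noncommutative finite-dimensional division algebra over a field $F$ and let $p\in F[x]$ be a nonconstant polynomial. Then $R$ is generated as an $F$-algebra by the set $p[R,R]=\{p(ab)-p(ba)\mid a,b\in R\}$. *)

(* Defs.v *)
From mathcomp Require Import all_boot all_order all_algebra all_field.
Set Implicit Arguments. Unset Strict Implicit. Unset Printing Implicit Defensive.
Import GRing.Theory.
Local Open Scope ring_scope.

Definition is_subalgebra (F : fieldType) (R : falgType F) (S : R -> Prop) : Prop :=
  [/\ S 1,
      (forall x y, S x -> S y -> S (x + y)),
      (forall (c : F) x, S x -> S (c *: x)) &
      (forall x y, S x -> S y -> S (x * y))].

Definition generates_algebra (F : fieldType) (R : falgType F) (T : R -> Prop) : Prop :=
  forall S : R -> Prop, is_subalgebra S -> (forall x, T x -> S x) -> forall x, S x.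

Definition peval (F : fieldType) (R : falgType F) (p : {poly F}) (a : R) : R :=
  (map_poly (in_alg R) p).[a].

Definition pcomm_set (F : fieldType) (R : falgType F) (p : {poly F}) : R -> Prop :=
  fun x => exists a b : R, x = peval p (a * b) - peval p (b * a).

(* Main.v *)
From HB Require Import structures.
From Stdlib Require Import Classical.
Require Import Defs.
From mathcomp Require Import all_boot all_order all_algebra all_field.
Set Implicit Arguments. Unset Strict Implicit. Unset Printing Implicit Defensive.
Import GRing.Theory.
Local Open Scope ring_scope.

Section A.
Variables (F : fieldType) (R : falgType F).

Lemma pevalE (p : {poly F}) (y : R) n : (size p <= n)%N ->
  peval p y = \sum_(i < n) p`_i *: y ^+ i.
Proof.
move=> hn; rewrite /peval (horner_coef_wide _ (n:=n)); last by rewrite size_map_poly.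
by apply: eq_bigr => i _; rewrite coef_map /= mulr_algl.
Qed.

Lemma conjX (u y : R) k : u \is a GRing.unit ->
  (u^-1 * y * u) ^+ k = u^-1 * y ^+ k * u.
Proof.
move=> uu; elim: k => [|k IH]; first by rewrite !expr0 mulr1 mulVr.
by rewrite exprS IH !mulrA mulrK // exprS !mulrA.
Qed.

Lemma peval_conj (p : {poly F}) (u y : R) : u \is a GRing.unit ->
  peval p (u^-1 * y * u) = u^-1 * peval p y * u.
Proof.
move=> uu; rewrite !(pevalE _ (leqnn _)) mulr_sumr mulr_suml.
by apply: eq_bigr => i _; rewrite conjX // -scalerAr -scalerAl.
Qed.

Lemma conjM (u x y : R) : u \is a GRing.unit ->
  (u * x * u^-1) * (u * y * u^-1) = u * (x * y) * u^-1.
Proof. by move=> uu; rewrite !mulrA mulrVK. Qed.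

Lemma T_conj (p : {poly F}) (t u : R) : pcomm_set p t -> u \is a GRing.unit ->
  pcomm_set p (u * t * u^-1).
Proof.
move=> [a [b ->]] uu; exists (u * a * u^-1), (u * b * u^-1).
have uu' : u^-1 \is a GRing.unit by rewrite unitrV.
have key : forall y, peval p (u * y * u^-1) = u * peval p y * u^-1.
  by move=> y; have := peval_conj p y uu'; rewrite invrK.
by rewrite !conjM // !key mulrBr mulrBl.
Qed.

Section Sub.
Variable S : R -> Prop.
Hypothesis HS : is_subalgebra S.

Lemma S1 : S 1. Proof. by case: HS. Qed.
Lemma SD x y : S x -> S y -> S (x + y). Proof. by case: HS => _ h _ _; apply: h. Qed.
Lemma SZ c x : S x -> S (c *: x). Proof. by case: HS => _ _ h _; apply: h. Qed.
Lemma SM x y : S x -> S y -> S (x * y). Proof. by case: HS => _ _ _ h; apply: h. Qed.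
Lemma S0 : S 0. Proof. by rewrite -(scale0r (1:R)); apply: SZ; apply: S1. Qed.
Lemma SN x : S x -> S (- x). Proof. by move=> h; rewrite -scaleN1r; apply: SZ. Qed.
Lemma SB x y : S x -> S y -> S (x - y). Proof. by move=> hx hy; apply: SD => //; apply: SN. Qed.
Lemma SX x k : S x -> S (x ^+ k).
Proof. by move=> hx; elim: k => [|k IH]; [rewrite expr0; apply: S1 | rewrite exprS; apply: SM]. Qed.
Lemma Speval (q : {poly F}) x : S x -> S (peval q x).
Proof.
move=> hx; rewrite (pevalE _ (leqnn _)).
by apply: (big_ind S S0 SD) => i _; apply: SZ; apply: SX.
Qed.
End Sub.

Lemma annih_poly (x : R) : exists2 q : {poly F}, q != 0 & peval q x = 0.
Proof.
set N := \dim (fullv : {vspace R}).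
pose X := [tuple x ^+ i | i < N.+1].
have nf : ~~ free X.
  rewrite /free size_tuple; apply/negP => /eqP h.
  by have := dimvS (subvf <<X>>%VS); rewrite h -/N ltnn.
have H : ~ (forall k : 'I_N.+1 -> F, \sum_(i < N.+1) k i *: X`_i = 0 -> forall i, k i = 0).
  by move=> H; apply: (negP nf); apply/freeP.
have [k Hk] := not_all_ex_not _ _ H.
have [Hs Hi] := imply_to_and _ _ Hk.
have [i ki] := not_all_ex_not _ _ Hi.
exists (\poly_(j < N.+1) k (inord j)).
  apply/negP => /eqP h; apply: ki.
  by have := congr1 (fun q : {poly F} => q`_i) h; rewrite coef_poly ltn_ord inord_val coef0.
rewrite (pevalE _ (size_poly _ _)) -[RHS]Hs.
by apply: eq_bigr => j _; rewrite coef_poly ltn_ord inord_val nth_mktuple.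
Qed.

Lemma inv_poly (x : R) : x \is a GRing.unit -> exists r : {poly F}, x^-1 = peval r x.
Proof.
move=> ux; have [q qn0 qx] := annih_poly x.
have inv1 : forall y : R, y * x = 1 -> x^-1 = y.
  by move=> y yx; rewrite -[y](mulrK ux) yx mul1r.
have pe : forall (p : {poly F}) c, peval (p * 'X + c%:P) x = peval p x * x + c%:A.
  by move=> p c; rewrite /peval rmorphD rmorphM /= map_polyX map_polyC hornerMXaddC.
elim/poly_ind: q qn0 qx => [|p c IH] qn0 qx; first by rewrite eqxx in qn0.
rewrite pe in qx.
have [c0|cn0] := eqVneq c 0.
  move: qx; rewrite c0 scale0r addr0 => qx.
  apply: IH.
    by apply/negP => /eqP p0; move: qn0; rewrite p0 c0 mul0r add0r eqxx.
  by rewrite -[peval p x](mulrK ux) qx mul0r.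
exists ((- c^-1)%:P * p); apply: inv1.
rewrite /peval rmorphM /= map_polyC hornerCM /=.
rewrite -mulrA.
have -> : (map_poly (in_alg R) p).[x] * x = - c%:A.
  by apply/eqP; rewrite -addr_eq0; apply/eqP; exact: qx.
by rewrite mulrN scaleNr mulNr opprK mulr_algl scalerA mulVf // scale1r.
Qed.

End A.
Section Fin.
Variables (F : fieldType) (R : falgType F) (s : seq F) (hs : forall c : F, c \in s).
Hypothesis hdiv : forall x : R, x != 0 -> x \is a GRing.unit.

Lemma FF_ax : finite_axiom (undup s).
Proof. by move=> c; rewrite count_uniq_mem ?undup_uniq // mem_undup hs. Qed.

Definition FF := fin_type FF_ax.
Let N := \dim {:R}.
Let b := vbasis {:R}.
Definition eR : seq R := map (fun f : {ffun 'I_N -> FF} => \sum_i (f i : F) *: b`_i) (enum {ffun 'I_N -> FF}).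
Lemma eR_all (x : R) : x \in eR.
Proof.
apply/mapP; exists [ffun i => (coord b i x : FF)]; first by rewrite mem_enum.
rewrite {1}(coord_vbasis (memvf x)); by apply: eq_bigr => i _; rewrite ffunE.
Qed.
Definition RR : Type := R.
HB.instance Definition _ := Falgebra.on RR.
Definition RR_pickle (x : RR) : nat := index x eR.
Definition RR_unpickle (n : nat) : option RR := nth None (map some eR) n.
Lemma RR_pickleK : pcancel RR_pickle RR_unpickle.
Proof.
move=> x; rewrite /RR_pickle/RR_unpickle.
by rewrite (nth_map x) ?index_mem ?eR_all // nth_index ?eR_all.
Qed.
HB.instance Definition _ := isCountable.Build RR RR_pickleK.
Lemma RR_ax : finite_axiom (undup eR : seq RR).
Proof. by move=> c; rewrite count_uniq_mem ?undup_uniq // mem_undup eR_all. Qed.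
HB.instance Definition _ := isFinite.Build RR RR_ax.

Lemma RR_comm : forall x y : R, x * y = y * x.
Proof.
have domR : GRing.integral_domain_axiom RR.
  move=> x y xy0; apply/norP=> [[x0 y0]]; move/negP: y0; apply.
  by rewrite -(mulKr (hdiv x0) y) xy0 mulr0.
exact: (@finDomain_mulrC RR domR).
Qed.
End Fin.

Lemma F_inf (F : fieldType) (R : falgType F)
  (hdiv : forall x : R, x != 0 -> x \is a GRing.unit)
  (hnc : exists x y : R, x * y != y * x) :
  forall s : seq F, exists c, c \notin s.
Proof.
move=> s; apply: NNPP => H.
have hs : forall c : F, c \in s.
  by move=> c; apply: NNPP => Hc; apply: H; exists c; apply/negP.
by case: hnc => x [y]; rewrite (RR_comm hs hdiv) eqxx.
Qed.

Lemma sc_comm (F : fieldType) (R : falgType F) (a b : F) (u w : R) :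
  a *: (b *: (u * w - w * u)) = (b *: (a *: u)) * w - w * (b *: (a *: u)).
Proof. by rewrite !scalerA -scalerAl -scalerAr -scalerBr mulrC. Qed.

Section Vander.
Variables (F : fieldType) (R : falgType F).
Hypothesis inf : forall s : seq F, exists c, c \notin s.

Lemma distinct_seq n : exists s : seq F, uniq s /\ size s = n.
Proof.
elim: n => [|n [s [us ss]]]; first by exists [::].
have [c cs] := inf s; exists (c :: s); by rewrite /= cs us ss.
Qed.

Lemma vander N (d : nat -> R) :
  (forall c : F, \sum_(i < N) c ^+ i *: d i = 0) -> forall i, (i < N)%N -> d i = 0.
Proof.
move=> H i hi; rewrite (coord_vbasis (memvf (d i))); apply: big1 => j _.
set phi := coord (vbasis fullv) j.
pose P := \poly_(k < N) phi (d k).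
have HP : P = 0.
  apply/eqP; apply/negPn/negP => Pn0.
  have [s [us ss]] := distinct_seq N.
  have hr : all (root P) s.
    apply/allP => c _; rewrite /root horner_poly; apply/eqP.
    have := congr1 phi (H c); rewrite /phi linear0 linear_sum /= => E; apply: (etrans _ E).
    by apply: eq_bigr => k _; rewrite linearZ /= mulrC.
  by have := max_poly_roots Pn0 hr us; rewrite ss ltnNge size_poly.
have := congr1 (fun q : {poly F} => q`_i) HP; rewrite coef_poly hi coef0 => ->.
by rewrite scale0r.
Qed.
End Vander.

Lemma frob_like (A : pzRingType) m (hm : (0 < m)%N)
  (B : forall i, (0 < i < m)%N -> ('C(m, i)%:R : A) = 0) (a b : A) :
  GRing.comm a b -> (a + b) ^+ m = a ^+ m + b ^+ m.
Proof.
move=> cab; rewrite exprDn_comm //; case: m hm B => // m _ B.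
rewrite big_ord_recr big_ord_recl /= subn0 subnn bin0 binn expr0 mulr1 mul1r !mulr1n.
rewrite big1 ?addr0 //; move=> i _.
by rewrite /bump /= add1n -mulr_natr B ?mulr0 //= ltnS ltn_ord.
Qed.

Section Jac.
Variables (F : fieldType) (R : falgType F).
Hypothesis hdiv : forall x : R, x != 0 -> x \is a GRing.unit.
Hypothesis hnc : exists x y : R, x * y != y * x.
Import FalgLfun.

Lemma jacobson m (hm : (0 < m)%N)
  (BF : forall i, (0 < i < m)%N -> ('C(m, i)%:R : F) = 0)
  (Q : forall y w : R, y ^+ m * w = w * y ^+ m) : False.
Proof.
have BR : forall i, (0 < i < m)%N -> ('C(m, i)%:R : R) = 0.
  by move=> i hi; rewrite -(scaler_nat _ (1:R)) BF // scale0r.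
have BE : forall i, (0 < i < m)%N -> ('C(m, i)%:R : 'End(R)) = 0.
  by move=> i hi; rewrite -(scaler_nat _ (1:'End(R))) BF // scale0r.
case: hnc => x [y0 nxy].
have x0 : x != 0 by apply: contraNneq nxy => ->; rewrite mul0r mulr0.
pose L := amull x; pose Rm := amulr x; pose d := L - Rm.
have dE : forall z, d z = x * z - z * x.
  by move=> z; rewrite /d add_lfunE opp_lfunE !lfunE.
have dpow : forall k z, (d ^+ k.+1) z = d ((d ^+ k) z).
  by move=> k z; rewrite exprSr lfun_mulE.
have Lpow : forall k z, (L ^+ k) z = x ^+ k * z.
  elim=> [|k IH] z; first by rewrite expr0 id_lfunE expr0 mul1r.
  by rewrite exprSr lfun_mulE IH lfunE /= exprS mulrA.
have NRpow : forall k z, ((- Rm) ^+ k) z = (-1) ^+ k *: (z * x ^+ k).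
  elim=> [|k IH] z; first by rewrite !expr0 id_lfunE scale1r mulr1.
  rewrite exprS lfun_mulE IH opp_lfunE lfunE /= mulNr -mulrA -exprS.
  by rewrite scalerN [in RHS]exprS mulN1r scaleNr.
have comLR : GRing.comm L (- Rm).
  apply/lfunP => z; rewrite !lfun_mulE !opp_lfunE !lfunE /=.
  by rewrite mulrN mulrA.
have dm : forall z, (d ^+ m) z = x ^+ m * z + (-1) ^+ m *: (z * x ^+ m).
  by move=> z; rewrite /d (frob_like hm BE comLR) add_lfunE Lpow NRpow.
have dm1 : (d ^+ m) 1 = 0.
  case: m hm {BF BR BE Q dm} => // m _.
  by rewrite exprS lfun_mulE dE mulr1 mul1r subrr linear0.
have dm0 : forall z, (d ^+ m) z = 0.
  move=> z; move: dm1; rewrite !dm mul1r mulr1 => h.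
  by rewrite -(Q x z) scalerAl -mulrDl h mul0r.
pose v k := (d ^+ k) y0.
have v1 : v 1%N != 0 by rewrite /v expr1 dE subr_eq0.
have vbig : forall k, v k != 0 -> (k <= m)%N.
  move=> k; apply: contraR; rewrite -ltnNge => /ltnW hk.
  by rewrite /v -(subnK hk) exprD lfun_mulE dm0.
have [k vk kmax] := ex_maxnP (ex_intro (fun k => v k != 0) 1%N v1) vbig.
have vk1 : v k.+1 = 0.
  by apply/eqP; apply: contraT => h; have := kmax _ h; rewrite ltnn.
have k1 : (0 < k)%N by apply: kmax.
pose w := v k.-1.
have cE : v k = d w by rewrite /w /v -dpow prednK.
have cd : d (v k) = 0 by rewrite -dpow.
have cx : x * v k = v k * x by apply/eqP; rewrite -subr_eq0 -dE cd.
have uc := hdiv vk.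
pose u := (v k)^-1 * w.
have xci : x * (v k)^-1 = (v k)^-1 * x.
  by apply: (mulIr uc); rewrite mulrVK // -mulrA cx mulKr.
have xu : x * u - u * x = 1.
  by rewrite /u mulrA xci -!mulrA -mulrBr -dE -cE mulVr.
have ux : u * x = x * u - 1 by rewrite -xu opprB addrC subrK.
have ux0 := hdiv x0.
have conj_h : x^-1 * (u * x) * x = u * x - 1.
  by rewrite {1}ux mulrBr mulKr // mulr1 mulrBl mulVr.
have := conjX (u * x) m ux0; rewrite conj_h -mulrA Q mulKr //.
rewrite (frob_like hm BR (commrN1 _)) => /(congr1 (fun z => z - (u * x) ^+ m)).
by rewrite addrAC subrr add0r => /eqP; rewrite signr_eq0.
Qed.
End Jac.

Section Final.
Variables (F : fieldType) (R : falgType F).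
Hypothesis hdiv : forall x : R, x != 0 -> x \is a GRing.unit.
Hypothesis hnc : exists x y : R, x * y != y * x.
Hypothesis inf : forall s : seq F, exists c, c \notin s.

Lemma no_central_power m : (0 < m)%N -> (forall y w : R, y ^+ m * w = w * y ^+ m) -> False.
Proof.
elim/ltn_ind: m => m IH hm Q.
case: (boolP [exists i : 'I_m, (0 < i)%N && ('C(m, i)%:R != 0 :> F)]).
  case/existsP => i /andP [i0 Ci]; apply: (IH i (ltn_ord i) i0) => y w.
  pose d k := ('C(m, k)%:R : F) *: (y ^+ k * w - w * y ^+ k).
  have H : forall c : F, \sum_(k < m.+1) c ^+ k *: d k = 0.
    move=> c; apply: (etrans _ (subrr ((c *: y + 1) ^+ m * w))).
    rewrite [X in _ = _ - X]Q exprD1n mulr_suml mulr_sumr -sumrB.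
    apply: eq_bigr => k _; rewrite /d exprZn.
    by rewrite -(scaler_nat _ (c ^+ k *: y ^+ k)) sc_comm.
  have := vander inf H (i := i); rewrite ltnS ltnW // => /(_ isT).
  rewrite /d => /eqP.
  by rewrite scaler_eq0 (negPf Ci) /= subr_eq0 => /eqP.
move=> nE; apply: (jacobson hdiv hnc hm _ Q) => i /andP [i0 im].
apply/eqP; apply: contraNT nE => Ci; apply/existsP; exists (Ordinal im).
by rewrite i0 Ci.
Qed.

Variable p : {poly F}.

Lemma power_central :
  (forall y s : R, peval p y * s = s * peval p y) -> (1 < size p)%N ->
  forall y w : R, y ^+ (size p).-1 * w = w * y ^+ (size p).-1.
Proof.
move=> Pc hp y w.
pose d i := p`_i *: (y ^+ i * w - w * y ^+ i).
have H : forall c : F, \sum_(i < size p) c ^+ i *: d i = 0.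
  move=> c; apply: (etrans _ (subrr (peval p (c *: y) * w))).
  rewrite [X in _ = _ - X]Pc (pevalE _ (leqnn _)) mulr_suml mulr_sumr -sumrB.
  apply: eq_bigr => k _; rewrite /d exprZn.
  by rewrite sc_comm.
have hp0 : (0 < size p)%N by apply: ltnW.
have hi : ((size p).-1 < size p)%N by rewrite prednK.
have := vander inf H hi.
move/eqP; rewrite scaler_eq0 -/(lead_coef p) lead_coef_eq0 -size_poly_eq0.
by rewrite (negPf (lt0n_neq0 hp0)) /= subr_eq0 => /eqP.
Qed.

Lemma P_central :
  (forall t : R, pcomm_set p t -> forall s, t * s = s * t) ->
  forall y s : R, peval p y * s = s * peval p y.
Proof.
move=> Tc y a; set q := peval p y.
have Tq : forall b, b \is a GRing.unit ->
    forall s, (q - b^-1 * q * b) * s = s * (q - b^-1 * q * b).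
  by move=> b ub; apply: Tc; exists b, (b^-1 * y); rewrite mulVKr // peval_conj.
have [->|a0] := eqVneq a 0; first by rewrite mulr0 mul0r.
have [a1|a10] := eqVneq (a + 1) 0.
  have -> : a = -1 by apply/eqP; rewrite -addr_eq0 a1.
  by rewrite mulrN1 mulN1r.
have ua := hdiv a0; have ua1 := hdiv a10.
set c1 := q - a^-1 * q * a; set c2 := q - (a + 1)^-1 * q * (a + 1).
have e1 : a * c1 = a * q - q * a by rewrite /c1 mulrBr !mulrA mulrV // mul1r.
have e2 : (a + 1) * c2 = a * q - q * a.
  rewrite /c2 mulrBr !mulrA mulrV // mul1r.
  by rewrite mulrDl mulrDr mul1r mulr1 opprD addrACA subrr addr0.
have e3 : a * (c1 - c2) = c2.
  by rewrite mulrBr e1 -e2 mulrDl mul1r addrAC subrr add0r.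
have [c12|c12] := eqVneq (c1 - c2) 0.
  move: e3; rewrite c12 mulr0 => c20; move: e2; rewrite -c20 mulr0 => /esym/subr0_eq.
  by move=> ->.
have ud := hdiv c12.
have Dc : forall s, (c1 - c2) * s = s * (c1 - c2).
  by move=> s; rewrite mulrBl mulrBr (Tq _ ua) (Tq _ ua1).
suff : (a * q - q * a) * (c1 - c2) = 0.
  move=> h; apply/esym; apply: subr0_eq.
  by rewrite -(mulrK ud (a * q - q * a)) h mul0r.
have h1 : a * q * (c1 - c2) = c2 * q by rewrite -mulrA -Dc mulrA e3.
have h2 : q * a * (c1 - c2) = q * c2 by rewrite -mulrA e3.
by rewrite mulrBl h1 h2 (Tq _ ua1) subrr.
Qed.

End Final.

Lemma S_inv (F : fieldType) (R : falgType F) (S : R -> Prop) (HS : is_subalgebra S)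
  (z : R) : z \is a GRing.unit -> S z -> S z^-1.
Proof. by move=> uz hz; have [r ->] := inv_poly uz; apply: Speval. Qed.

Lemma T_central (F : fieldType) (R : falgType F)
  (hdiv : forall x : R, x != 0 -> x \is a GRing.unit) (p : {poly F})
  (S : R -> Prop) (HS : is_subalgebra S) (HT : forall x, pcomm_set p x -> S x)
  (x0 : R) (nS : ~ S x0) :
  forall t : R, pcomm_set p t -> forall s, t * s = s * t.
Proof.
move=> t Tt.
have A : forall b, ~ S b -> t * b = b * t.
  move=> b nb.
  have b0 : b != 0 by apply/eqP => b0; apply: nb; rewrite b0; apply: S0.
  have nb1 : ~ S (b + 1).
    by move=> h; apply: nb; have := SB HS h (S1 HS); rewrite addrK.
  have b10 : b + 1 != 0 by apply/eqP => b0'; apply: nb1; rewrite b0'; apply: S0.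
  have ub := hdiv _ b0; have ub1 := hdiv _ b10.
  have St := HT _ Tt.
  have St1 := HT _ (T_conj Tt ub); have St2 := HT _ (T_conj Tt ub1).
  set t1 := b * t * b^-1 in St1 *; set t2 := (b + 1) * t * (b + 1)^-1 in St2 *.
  have e1 : t1 * b = b * t by rewrite /t1 mulrVK.
  have e2 : t2 * (b + 1) = (b + 1) * t by rewrite /t2 mulrVK.
  have key : t - t2 = (t2 - t1) * b.
    move: e2; rewrite mulrDr mulr1 mulrDl mul1r => e2.
    have e3 : t2 * b = t - t2 + b * t by rewrite [t - t2 + b * t]addrC addrA -e2 addrK.
    by rewrite mulrBl e1 e3 addrK.
  have [h|h] := eqVneq (t2 - t1) 0.
    move: key; rewrite h mul0r => /subr0_eq tt2.
    by rewrite {1}tt2 (subr0_eq h) e1.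
  exfalso; apply: nb.
  have -> : b = (t2 - t1)^-1 * (t - t2) by rewrite key mulKr // hdiv.
  by apply: (SM HS); [apply: (S_inv HS (hdiv _ h)); apply: (SB HS) | apply: (SB HS)].
move=> s; case: (classic (S s)) => hs; last exact: A.
have n2 : ~ S (x0 + s) by move=> h; apply: nS; have := SB HS h hs; rewrite addrK.
by have := A _ n2; rewrite mulrDr mulrDl (A _ nS) => /addrI.
Qed.

Unset Implicit Arguments.
Set Strict Implicit.

Theorem theorem2p3 (F : fieldType) (R : falgType F)
  (hdiv : forall x : R, x != 0 -> x \is a GRing.unit)
  (hnc : exists x y : R, x * y != y * x)
  (p : {poly F}) (hp : (1 < size p)%N) :
  @generates_algebra F R (pcomm_set (R:=R) p).
Proof.
move=> S HS HT x0; apply: NNPP => nS.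
have inf := F_inf hdiv hnc.
have Tc := T_central hdiv HS HT nS.
have Pc := P_central hdiv Tc.
have Xc := power_central inf Pc hp.
apply: (no_central_power hdiv hnc inf _ Xc).
have hp0 : (0 < size p)%N := ltnW hp.
by rewrite -ltnS prednK.
Qed.
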